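(* Let $\alpha\in M^{n+1}$ satisfy the standing assumptions and let $h\in T_\alpha M^{n+1}$. Then $h\in\mathrm{Hor}^n_\alpha$ if and only if, for all $k=1,\dots,n-1$, $$\langle(D_\tau h)_k,v_k\rangle-4\frac{|\tau_k|}{|\tau_{k-1}|}\Big\langle(D_\tau h)_{k-1},\,b_{k-1}^{-1}v_k^\parallel+\big(\tfrac14-b_{k-1}^{-1}\big)\lambda_{k-1}v_{k-1}\Big\rangle=0,$$ where $v_k^\parallel$ is the parallel transport of $v_k$ along $\gamma_{k-1}$ to $x_{k-1}$ and $\lambda_{k}:=\langle v_{k+1}^\parallel,v_{k}\rangle$. Moreover every $w\in T_\alpha M^{n+1}$ decomposes uniquely as $w=mv+(w-mv)$ with $mv\in\mathrm{Ver}^n_\alpha$ and $w-mv\in\mathrm{Hor}^n_\alpha$, where $m=(m_k)_k\in\mathbb R^{n+1}$ with $m_0=m_n=0$ is characterized by the recurrence, for $k=1,\dots,n-1$, $$A_km_{k+1}+B_km_k+C_km_{k-1}=D_k,$$ with $A_k=\lambda_k$, $B_k=-1-4\frac{|\tau_k|}{|\tau_{k-1}|}\big(b_{k-1}^{-2}+\lambda_{k-1}^2(\tfrac14-b_{k-1}^{-2})\big)$, $C_k=\frac{|\tau_k|}{|\tau_{k-1}|}\lambda_{k-1}$, and $$D_k=\langle(D_\tau w)_k,v_k\rangle-4\frac{|\tau_k|}{|\tau_{k-1}|}\Big(b_{k-1}^{-1}\langle(D_\tau w)_{k-1},v_k^\parallel\rangle+\big(\tfrac14-b_{k-1}^{-1}\big)\lambda_{k-1}\langle(D_\tau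 w)_{k-1},v_{k-1}\rangle\Big).$$
   Context: $(M,\langle\cdot,\cdot\rangle)$ is a Riemannian manifold of constant sectional curvature $K\in\{-1,0,1\}$, with norm $|\cdot|$ and Levi-Civita connection $\nabla$. Fix $n\ge1$. A discrete curve is $\alpha=(x_0,\dots,x_n)\in M^{n+1}$, $T_\alpha M^{n+1}=\{w=(w_0,\dots,w_n):w_k\in T_{x_k}M\}$. Standing assumptions: $x_k\neq x_{k+1}$ and $x_k,x_{k+1}$ are joined by a geodesic $\gamma_k$ with initial velocity $\tau_k:=\log_{x_k}x_{k+1}$ (with $|\tau_k|<\pi$ if $K=1$). Set $v_k:=\tau_k/|\tau_k|$; for $u\in T_{x_k}M$, $u^T:=\langle u,v_k\rangle v_k$, $u^N:=u-u^T$; for $u\in T_{x_{k+1}}M$, $u^\parallel$ is the parallel transport of $u$ along $\gamma_k$ to $x_k$. Coefficients: $a_k=\cosh|\tau_k|,\ b_k=\sinh|\tau_k|/|\tau_k|$ if $K=-1$; $a_k=b_k=1$ if $K=0$; $a_k=\cos|\tau_k|,\ b_k=\sin|\tau_k|/|\tau_k|$ if $K=1$. Define $(D_\tau w)_k:=(w_{k+1}^\parallel-w_k)^T+b_k^{-1}(w_{k+1}^\parallel-a_kw_k)^N$ and the Riemannian metric $$G^n_\alpha(w,w)=|w_0|^2+\sum_{k=0}^{n-1}\Big(|(D_\tau w)_k^N|^2+\tfrac14|(D_\tau w)_k^T|^2\Big)\frac1{|\tau_k|}.$$ Discrete vertical and horizontal spaces: $\mathrm{Ver}^n_\alpha:=\{mv=(m_kv_k)_k: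 m\in\mathbb R^{n+1},\ m_0=m_n=0\}$ (with $v_n$ any vector, irrelevant since $m_n=0$), and $\mathrm{Hor}^n_\alpha:=\{h\in T_\alpha M^{n+1}: G^n_\alpha(h,mv)=0\ \text{for all } m\in\mathbb R^{n+1}\text{ with } m_0=m_n=0\}$. *)

(* Defs.v *)
From Stdlib Require Import Reals.
Open Scope R_scope.

(* Tangent spaces of the d-dimensional manifold M are modelled, via orthonormal
   frames, as R^d; a vector is a function nat -> R of which only the
   coordinates i < d matter. *)
Definition vec := nat -> R.

Fixpoint rsum (n : nat) (f : nat -> R) : R :=
  match n with O => 0 | S n' => rsum n' f + f n' end.

Definition vadd (u v : vec) : vec := fun i => u i + v i.
Definition vsub (u v : vec) : vec := fun i => u i - v i.
Definition vscale (c : R) (u : vec) : vec := fun i => c * u i.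

Definition ip (d : nat) (u v : vec) : R := rsum d (fun i => u i * v i).
Definition vnorm (d : nat) (u : vec) : R := sqrt (ip d u u).

Definition mapply (d : nat) (A : nat -> nat -> R) (u : vec) : vec :=
  fun i => rsum d (fun j => A i j * u j).

(* The sectional curvature K in {-1,0,1} *)
Inductive curv := Hyp | Flat | Sph .

Definition acoef (K : curv) (t : R) : R :=
  match K with Hyp => cosh t | Flat => 1 | Sph => cos t end.
Definition bcoef (K : curv) (t : R) : R :=
  match K with Hyp => sinh t / t | Flat => 1 | Sph => sin t / t end.

Section Curve.
(* d = dim M, n = number of segments, tau k = log_{x_k} x_{k+1} (in the frame
   at x_k), Q k = matrix of parallel transport along gamma_k from
   T_{x_{k+1}} M to T_{x_k} M (in the chosen frames). *)
Variables (d n : nat) (K : curv) (tau : nat -> vec) (Q : nat -> nat -> nat -> R).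

Definition ntau (k : nat) : R := vnorm d (tau k).
Definition ak (k : nat) : R := acoef K (ntau k).
Definition bk (k : nat) : R := bcoef K (ntau k).

Definition par (k : nat) (u : vec) : vec := mapply d (Q k) u.

Definition vdir (k : nat) : vec := vscale (/ ntau k) (tau k).

Definition tang (k : nat) (u : vec) : vec := vscale (ip d u (vdir k)) (vdir k).
Definition nrm (k : nat) (u : vec) : vec := vsub u (tang k u).

Definition Dtau (w : nat -> vec) (k : nat) : vec :=
  vadd (tang k (vsub (par k (w (S k))) (w k)))
       (vscale (/ bk k) (nrm k (vsub (par k (w (S k))) (vscale (ak k) (w k))))).

Definition Gbil (w z : nat -> vec) : R :=
  ip d (w O) (z O) +
  rsum n (fun k =>
    (ip d (nrm k (Dtau w k)) (nrm k (Dtau z k))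
     + / 4 * ip d (tang k (Dtau w k)) (tang k (Dtau z k))) * / ntau k).

Definition vert (m : nat -> R) : nat -> vec := fun k => vscale (m k) (vdir k).

Definition fsub (w z : nat -> vec) : nat -> vec := fun k => vsub (w k) (z k).

Definition Hor (h : nat -> vec) : Prop :=
  forall m : nat -> R, m O = 0 -> m n = 0 -> Gbil h (vert m) = 0.

Definition lam (k : nat) : R := ip d (par k (vdir (S k))) (vdir k).

Definition ratio (k : nat) : R := ntau k / ntau (k - 1).

Definition HorCond (h : nat -> vec) (k : nat) : Prop :=
  ip d (Dtau h k) (vdir k)
  - 4 * ratio k *
    ip d (Dtau h (k - 1))
       (vadd (vscale (/ bk (k - 1)) (par (k - 1) (vdir k)))
             (vscale ((/ 4 - / bk (k - 1)) * lam (k - 1)) (vdir (k - 1))))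
  = 0.

Definition Acoef (k : nat) : R := lam k.
Definition Bcoef (k : nat) : R :=
  -1 - 4 * ratio k * (/ (bk (k - 1)) ^ 2
                      + (lam (k - 1)) ^ 2 * (/ 4 - / (bk (k - 1)) ^ 2)).
Definition Ccoef (k : nat) : R := ratio k * lam (k - 1).
Definition Dcoef (w : nat -> vec) (k : nat) : R :=
  ip d (Dtau w k) (vdir k)
  - 4 * ratio k *
    (/ bk (k - 1) * ip d (Dtau w (k - 1)) (par (k - 1) (vdir k))
     + (/ 4 - / bk (k - 1)) * lam (k - 1) * ip d (Dtau w (k - 1)) (vdir (k - 1))).

End Curve.

(* Main.v *)
Require Import Defs.
From Stdlib Require Import Reals Lra Lia FunctionalExtensionality Classical.
Open Scope R_scope.

Lemma rsum_ext n f g : (forall k, (k < n)%nat -> f k = g k) -> rsum n f = rsum n g.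
Proof. induction n; simpl; intros H; [reflexivity|]. rewrite IHn by (intros; apply H; lia). rewrite H by lia. reflexivity. Qed.

Lemma rsum_plus n f g : rsum n (fun k => f k + g k) = rsum n f + rsum n g.
Proof. induction n; simpl; [ring|]. rewrite IHn; ring. Qed.

Lemma rsum_minus n f g : rsum n (fun k => f k - g k) = rsum n f - rsum n g.
Proof. induction n; simpl; [ring|]. rewrite IHn; ring. Qed.

Lemma rsum_scal n c f : rsum n (fun k => c * f k) = c * rsum n f.
Proof. induction n; simpl; [ring|]. rewrite IHn; ring. Qed.

Lemma rsum_zero n : rsum n (fun _ => 0) = 0.
Proof. induction n; simpl; [ring|]. rewrite IHn; ring. Qed.

Lemma rsum_nonneg n f : (forall k, (k < n)%nat -> 0 <= f k) -> 0 <= rsum n f.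
Proof. induction n; simpl; intros H; [lra|]. assert (0 <= f n) by (apply H; lia).
 assert (0 <= rsum n f) by (apply IHn; intros; apply H; lia). lra. Qed.

Lemma rsum_zero_each n f : (forall k, (k < n)%nat -> 0 <= f k) -> rsum n f = 0 ->
  forall k, (k < n)%nat -> f k = 0.
Proof. induction n; simpl; intros H E k Hk; [lia|].
 assert (0 <= f n) by (apply H; lia).
 assert (0 <= rsum n f) by (apply rsum_nonneg; intros; apply H; lia).
 destruct (Nat.eq_dec k n) as [->|]; [lra|]. apply IHn; [intros; apply H; lia|lra|lia]. Qed.

Lemma rsum_ind n p f : (p < n)%nat -> rsum n (fun j => if Nat.eqb j p then f j else 0) = f p.
Proof. induction n; simpl; intros Hp; [lia|].
 destruct (Nat.eq_dec p n) as [->|].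
 - rewrite Nat.eqb_refl. rewrite (rsum_ext n _ (fun _ => 0)). rewrite rsum_zero; ring.
   intros k Hk. destruct (Nat.eqb_spec k n); [lia|reflexivity].
 - rewrite IHn by lia. destruct (Nat.eqb_spec n p); [lia|ring]. Qed.

Lemma rsum_shift n F G : rsum n (fun k => F (S k) + G k) + F O = rsum n (fun j => F j + G j) + F n.
Proof. induction n; simpl; [ring|]. lra. Qed.

Lemma ip_sym d u v : ip d u v = ip d v u.
Proof. unfold ip. apply rsum_ext; intros; ring. Qed.
Lemma ip_addl d u v w : ip d (vadd u v) w = ip d u w + ip d v w.
Proof. unfold ip, vadd. rewrite <- rsum_plus. apply rsum_ext; intros; ring. Qed.
Lemma ip_subl d u v w : ip d (vsub u v) w = ip d u w - ip d v w.
Proof. unfold ip, vsub. rewrite <- rsum_minus. apply rsum_ext; intros; ring. Qed.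
Lemma ip_scall d c u w : ip d (vscale c u) w = c * ip d u w.
Proof. unfold ip, vscale. rewrite <- rsum_scal. apply rsum_ext; intros; ring. Qed.
Lemma ip_addr d u v w : ip d w (vadd u v) = ip d w u + ip d w v.
Proof. rewrite !(ip_sym d w). apply ip_addl. Qed.
Lemma ip_subr d u v w : ip d w (vsub u v) = ip d w u - ip d w v.
Proof. rewrite !(ip_sym d w). apply ip_subl. Qed.
Lemma ip_scalr d c u w : ip d w (vscale c u) = c * ip d w u.
Proof. rewrite !(ip_sym d w). apply ip_scall. Qed.
Lemma ip_pos d u : 0 <= ip d u u.
Proof. unfold ip. apply rsum_nonneg; intros. apply Rle_0_sqr. Qed.
Lemma ip_zero d u : ip d u u = 0 -> forall w, ip d u w = 0.
Proof. intros H w. unfold ip in *.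
 assert (E := rsum_zero_each d (fun i => u i * u i) (fun k _ => Rle_0_sqr (u k)) H).
 rewrite (rsum_ext _ _ (fun _ => 0)); [apply rsum_zero|].
 intros k Hk. specialize (E k Hk). simpl in E. assert (u k = 0) by nra. rewrite H0; ring. Qed.

Lemma mapply_sub d A x y : mapply d A (vsub x y) = vsub (mapply d A x) (mapply d A y).
Proof. apply functional_extensionality; intro i. unfold mapply, vsub. rewrite <- rsum_minus.
 apply rsum_ext; intros; ring. Qed.
Lemma mapply_scale d A c x : mapply d A (vscale c x) = vscale c (mapply d A x).
Proof. apply functional_extensionality; intro i. unfold mapply, vscale. rewrite <- rsum_scal.
 apply rsum_ext; intros; ring. Qed.

Lemma ipD d K tau Q w k u :
  ip d (Dtau d K tau Q w k) u =
  (ip d (par d Q k (w (S k))) (vdir d tau k) - ip d (w k) (vdir d tau k)) * ip d (vdir d tau k) u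
  + / bk d K tau k * ((ip d (par d Q k (w (S k))) u - ak d K tau k * ip d (w k) u)
     - (ip d (par d Q k (w (S k))) (vdir d tau k) - ak d K tau k * ip d (w k) (vdir d tau k))
        * ip d (vdir d tau k) u).
Proof.
  unfold Dtau, tang, nrm.
  repeat (rewrite ?ip_addl, ?ip_scall, ?ip_subl). unfold tang. repeat (rewrite ?ip_addl, ?ip_scall, ?ip_subl). ring.
Qed.

Lemma ntau_pos d tau k : ntau d tau k <> 0 -> 0 < ntau d tau k.
Proof. intros H. unfold ntau, vnorm in *. pose proof (sqrt_pos (ip d (tau k) (tau k))). lra. Qed.

Lemma vdir_unit d tau k : ntau d tau k <> 0 -> ip d (vdir d tau k) (vdir d tau k) = 1.
Proof. intros H. unfold vdir. rewrite ip_scall, ip_scalr.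
 assert (E : ip d (tau k) (tau k) = ntau d tau k * ntau d tau k).
 { unfold ntau, vnorm. rewrite sqrt_sqrt; [reflexivity|apply ip_pos]. }
 rewrite E. field. auto. Qed.

Lemma nrm_nrm d tau k A B : ip d (vdir d tau k) (vdir d tau k) = 1 ->
  ip d (nrm d tau k A) (nrm d tau k B) = ip d A B - ip d A (vdir d tau k) * ip d B (vdir d tau k).
Proof. intros H. unfold nrm, tang. rewrite !ip_subl, !ip_subr, !ip_scall, !ip_scalr, H.
 rewrite (ip_sym d (vdir d tau k) B). ring. Qed.

Lemma tang_tang d tau k A B : ip d (vdir d tau k) (vdir d tau k) = 1 ->
  ip d (tang d tau k A) (tang d tau k B) = ip d A (vdir d tau k) * ip d B (vdir d tau k).
Proof. intros H. unfold tang. rewrite !ip_scall, !ip_scalr, H. ring. Qed.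

Lemma ipDvert d K tau Q m k u : ntau d tau k <> 0 ->
  ip d (Dtau d K tau Q (vert d tau m) k) u =
  (m (S k) * lam d tau Q k - m k) * ip d (vdir d tau k) u
  + / bk d K tau k * m (S k) * (ip d (par d Q k (vdir d tau (S k))) u - lam d tau Q k * ip d (vdir d tau k) u).
Proof. intros H. rewrite ipD. unfold vert, par. rewrite mapply_scale, !ip_scall.
 rewrite vdir_unit by auto. unfold lam, par. ring. Qed.

Lemma HorCond_iff d K tau Q h k : HorCond d K tau Q h k <-> Dcoef d K tau Q h k = 0.
Proof. unfold HorCond, Dcoef. rewrite ip_addr, !ip_scalr.
 replace ((/ 4 - / bk d K tau (k - 1)) * lam d tau Q (k - 1) * ip d (Dtau d K tau Q h (k - 1)) (vdir d tau (k - 1)))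
 with ((/ 4 - / bk d K tau (k - 1)) * lam d tau Q (k - 1) * ip d (Dtau d K tau Q h (k - 1)) (vdir d tau (k - 1))) by ring.
 split; intro E; rewrite <- E; ring. Qed.

Lemma Gvert d n K tau Q h m : (forall k, (k < n)%nat -> ntau d tau k <> 0) ->
  m O = 0 -> m n = 0 ->
  Gbil d n K tau Q h (vert d tau m) =
  rsum n (fun j => m j * (- / (4 * ntau d tau j)) * Dcoef d K tau Q h j).
Proof.
  intros Hn H0 Hn0.
  set (Av := fun k => ip d (Dtau d K tau Q h k) (vdir d tau k)).
  set (Pa := fun k => ip d (Dtau d K tau Q h k) (par d Q k (vdir d tau (S k)))).
  set (F := fun j => m j * (lam d tau Q (j-1)%nat * Av (j-1)%nat / 4
       + / bk d K tau (j-1)%nat * (Pa (j-1)%nat - lam d tau Q (j-1)%nat * Av (j-1)%nat)) * / ntau d tau (j-1)%nat).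
  set (G := fun k => m k * (- / (4 * ntau d tau k)) * Av k).
  unfold Gbil. unfold vert at 1. rewrite ip_scalr, H0, Rmult_0_l, Rplus_0_l.
  rewrite (rsum_ext n _ (fun k => F (S k) + G k)).
  2:{ intros k Hk. pose proof (Hn k Hk) as Hk'. pose proof (vdir_unit d tau k Hk') as U.
      rewrite nrm_nrm, tang_tang by exact U.
      rewrite (ip_sym d (Dtau d K tau Q h k)).
      rewrite !ipDvert by exact Hk'.
      rewrite U. rewrite (ip_sym d (vdir d tau k) (Dtau d K tau Q h k)).
      rewrite (ip_sym d (par d Q k (vdir d tau (S k))) (Dtau d K tau Q h k)).
      change (ip d (par d Q k (vdir d tau (S k))) (vdir d tau k)) with (lam d tau Q k).
      unfold F, G. simpl (S k - 1)%nat. rewrite Nat.sub_0_r. fold (Av k) (Pa k).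
      set (c := / bk d K tau k). field. auto. }
  pose proof (rsum_shift n F G) as HS.
  assert (F0 : F O = 0) by (unfold F; rewrite H0; ring).
  assert (Fn : F n = 0) by (unfold F; rewrite Hn0; ring).
  rewrite F0, Fn in HS. rewrite (Rplus_0_r) in HS. rewrite Rplus_0_r in HS. rewrite HS.
  apply rsum_ext. intros j Hj. destruct j as [|j].
  - unfold F, G. rewrite H0. ring.
  - unfold F, G, Dcoef, ratio. simpl (S j - 1)%nat. rewrite Nat.sub_0_r. unfold Av, Pa.
    set (c := / bk d K tau j). field. split; apply Hn; lia.
Qed.

Lemma Dtau_sub d K tau Q w z k u :
  ip d (Dtau d K tau Q (fsub w z) k) u = ip d (Dtau d K tau Q w k) u - ip d (Dtau d K tau Q z k) u.
Proof. rewrite !ipD. unfold fsub, par. rewrite mapply_sub. rewrite !ip_subl. ring. Qed.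

Lemma Dcoef_sub d K tau Q w z k :
  Dcoef d K tau Q (fsub w z) k = Dcoef d K tau Q w k - Dcoef d K tau Q z k.
Proof. unfold Dcoef. rewrite !Dtau_sub. ring. Qed.

Lemma Dcoef_vert d K tau Q m k : (1 <= k)%nat ->
  ntau d tau k <> 0 -> ntau d tau (k-1) <> 0 ->
  (forall u v, ip d (par d Q (k-1) u) (par d Q (k-1) v) = ip d u v) ->
  Dcoef d K tau Q (vert d tau m) k =
  Acoef d tau Q k * m (S k) + Bcoef d K tau Q k * m k + Ccoef d tau Q k * m (k-1)%nat.
Proof.
  intros Hk H1 H2 Iso. destruct k as [|j]; [lia|]. simpl (S j - 1)%nat in *. rewrite Nat.sub_0_r in *.
  unfold Dcoef. simpl (S j - 1)%nat. rewrite Nat.sub_0_r. rewrite !ipDvert by auto.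
  rewrite Iso. rewrite !vdir_unit by auto.
  rewrite (ip_sym d (vdir d tau j) (par d Q j (vdir d tau (S j)))).
  change (ip d (par d Q j (vdir d tau (S j))) (vdir d tau j)) with (lam d tau Q j).
  change (ip d (par d Q (S j) (vdir d tau (S (S j)))) (vdir d tau (S j))) with (lam d tau Q (S j)).
  unfold Acoef, Bcoef, Ccoef. simpl (S j - 1)%nat. rewrite Nat.sub_0_r.
  rewrite <- pow_inv. set (c := / bk d K tau j). set (c' := / bk d K tau (S j)). field.
Qed.

Lemma bk_nz d K tau k : ntau d tau k <> 0 -> (K = Sph -> ntau d tau k < PI) -> bk d K tau k <> 0.
Proof. intros H Hs. pose proof (ntau_pos d tau k H) as P. unfold bk, bcoef.
 destruct K.
 - unfold sinh. assert (exp (- ntau d tau k) < exp (ntau d tau k)) by (apply exp_increasing; lra).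
   intro E. unfold Rdiv in E. apply Rmult_integral in E. destruct E as [E|E].
   + lra.
   + apply Rinv_neq_0_compat in H. contradiction.
 - lra.
 - pose proof (sin_gt_0 _ P (Hs eq_refl)). intro E. unfold Rdiv in E.
   apply Rmult_integral in E. destruct E as [E|E]; [lra|]. apply Rinv_neq_0_compat in H. contradiction.
Qed.

Lemma posdef d n K tau Q m :
  (forall k, (k < n)%nat -> ntau d tau k <> 0) ->
  (forall k, (k < n)%nat -> K = Sph -> ntau d tau k < PI) ->
  (forall k, (k < n)%nat -> forall u v : vec, ip d (par d Q k u) (par d Q k v) = ip d u v) ->
  m O = 0 -> m n = 0 -> Gbil d n K tau Q (vert d tau m) (vert d tau m) = 0 ->
  forall k, (k <= n)%nat -> m k = 0.
Proof.
  intros Hn Hpi Iso H0 Hn0 G.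
  unfold Gbil in G. unfold vert at 1 2 in G. rewrite ip_scall, H0, Rmult_0_l, Rplus_0_l in G.
  set (B := fun k => Dtau d K tau Q (vert d tau m) k) in *.
  assert (T : forall k, (k < n)%nat ->
     ip d (nrm d tau k (B k)) (nrm d tau k (B k)) = 0 /\ ip d (tang d tau k (B k)) (tang d tau k (B k)) = 0).
  { intros k Hk. pose proof (ntau_pos d tau k (Hn k Hk)) as P.
    assert (Z := rsum_zero_each n _ (fun k Hk => Rmult_le_pos _ _
       (Rplus_le_le_0_compat _ _ (ip_pos _ _) (Rmult_le_pos _ _ (Rlt_le _ _ (Rinv_0_lt_compat 4 ltac:(lra))) (ip_pos _ _)))
       (Rlt_le _ _ (Rinv_0_lt_compat _ (ntau_pos d tau k (Hn k Hk))))) G k Hk).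
    simpl in Z. fold (B k) in Z.
    pose proof (ip_pos d (nrm d tau k (B k))). pose proof (ip_pos d (tang d tau k (B k))).
    apply Rmult_integral in Z. destruct Z as [Z|Z].
    - split; lra.
    - exfalso. apply (Rinv_neq_0_compat (ntau d tau k)); auto. }
  assert (St : forall k, (S k < n)%nat -> m k = 0 -> m (S k) = 0).
  { intros k Hk Hm. destruct (T k ltac:(lia)) as [T1 T2].
    assert (Hk' : ntau d tau k <> 0) by (apply Hn; lia).
    assert (Hk'' : ntau d tau (S k) <> 0) by (apply Hn; lia).
    pose proof (vdir_unit d tau k Hk') as U.
    pose proof (vdir_unit d tau (S k) Hk'') as U'.
    rewrite tang_tang in T2 by exact U. unfold B in T2. rewrite ipDvert in T2 by exact Hk'.
    rewrite U in T2. change (ip d (par d Q k (vdir d tau (S k))) (vdir d tau k)) with (lam d tau Q k) in T2.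
    rewrite Hm in T2.
    assert (E1 : m (S k) * lam d tau Q k = 0) by nra.
    pose proof (ip_zero d _ T1 (par d Q k (vdir d tau (S k)))) as T3.
    unfold nrm, tang in T3. rewrite ip_subl, ip_scall in T3. unfold B in T3.
    rewrite !ipDvert in T3 by exact Hk'.
    rewrite Iso in T3 by lia. rewrite U, U' in T3.
    rewrite (ip_sym d (vdir d tau k)) in T3.
    change (ip d (par d Q k (vdir d tau (S k))) (vdir d tau k)) with (lam d tau Q k) in T3.
    rewrite Hm in T3.
    assert (Hb := bk_nz d K tau k Hk' (Hpi k ltac:(lia))).
    set (c := / bk d K tau k) in T3. assert (c <> 0) by (apply Rinv_neq_0_compat; auto).
    set (l := lam d tau Q k) in *.
    assert (E2 : c * (m (S k) * (1 - l * l)) = 0) by (rewrite <- T3; ring).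
    apply Rmult_integral in E2. destruct E2 as [E2|E2]; [contradiction|].
    replace (m (S k)) with (m (S k) * (1 - l * l) + (m (S k) * l) * l) by ring.
    rewrite E2, E1. ring. }
  assert (All : forall k, (k < n)%nat -> m k = 0).
  { induction k; intros Hk; [exact H0|]. apply St; [exact Hk|]. apply IHk; lia. }
  intros k Hk. destruct (Nat.eq_dec k n) as [->|]; [exact Hn0|]. apply All; lia.
Qed.

Lemma rsum_row N (a : nat -> R) x' v :
  rsum (S N) (fun j => a j * (if Nat.ltb j N then x' j else v)) = rsum N (fun j => a j * x' j) + a N * v.
Proof. simpl. rewrite Nat.ltb_irrefl. f_equal. apply rsum_ext. intros k Hk.
 apply Nat.ltb_lt in Hk. rewrite Hk. reflexivity. Qed.

Lemma LA N : forall a : nat -> nat -> R,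
  (forall x, (forall i, (i < N)%nat -> rsum N (fun j => a i j * x j) = 0) -> forall i, (i < N)%nat -> x i = 0) ->
  forall b, exists x, forall i, (i < N)%nat -> rsum N (fun j => a i j * x j) = b i.
Proof.
  induction N as [|N IH]; intros a Hinj b.
  { exists (fun _ => 0). intros; lia. }
  assert (Hr : exists r, (r < S N)%nat /\ a r N <> 0).
  { apply NNPP. intro C.
    assert (Z : forall r, (r < S N)%nat -> a r N = 0).
    { intros r Hr. apply NNPP. intro E. apply C. exists r; auto. }
    set (x := fun j => if Nat.ltb j N then 0 else 1).
    assert (x N = 0).
    { apply Hinj; [|lia]. intros i Hi. unfold x. rewrite rsum_row, Z by exact Hi.
      rewrite (rsum_ext _ _ (fun _ => 0)) by (intros; ring). rewrite rsum_zero; ring. }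
    unfold x in H. rewrite Nat.ltb_irrefl in H. lra. }
  destruct Hr as [r [Hr Hp]].
  set (p := a r N) in *.
  set (sg := fun i => if Nat.ltb i r then i else S i).
  assert (Hsg : forall i, (i < N)%nat -> (sg i < S N)%nat /\ sg i <> r).
  { intros i Hi. unfold sg. destruct (Nat.ltb_spec i r); lia. }
  assert (Hcov : forall i, (i < S N)%nat -> i <> r -> exists i', (i' < N)%nat /\ sg i' = i).
  { intros i Hi Hne. destruct (Nat.lt_ge_cases i r).
    - exists i. unfold sg. destruct (Nat.ltb_spec i r); split; lia.
    - exists (i - 1)%nat. unfold sg. destruct (Nat.ltb_spec (i-1) r); split; lia. }
  set (a' := fun i j => a (sg i) j - a (sg i) N / p * a r j).
  assert (Ha' : forall i x', rsum N (fun j => a' i j * x' j) =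
      rsum N (fun j => a (sg i) j * x' j) - a (sg i) N / p * rsum N (fun j => a r j * x' j)).
  { intros i x'. rewrite <- rsum_scal, <- rsum_minus. apply rsum_ext; intros; unfold a'; ring. }
  assert (Hinj' : forall x, (forall i, (i < N)%nat -> rsum N (fun j => a' i j * x j) = 0) -> forall i, (i < N)%nat -> x i = 0).
  { intros x' Hx' i Hi.
    set (Sr := rsum N (fun j => a r j * x' j)).
    set (x := fun j => if Nat.ltb j N then x' j else - Sr / p).
    assert (Hx : forall i, (i < S N)%nat -> rsum (S N) (fun j => a i j * x j) = 0).
    { intros i0 Hi0. unfold x. rewrite rsum_row.
      destruct (Nat.eq_dec i0 r) as [->|Hne].
      - fold Sr. fold p. field. auto.
      - destruct (Hcov i0 Hi0 Hne) as [i' [Hi' E]]. subst i0.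
        specialize (Hx' i' Hi'). rewrite Ha' in Hx'. fold Sr in Hx'.
        assert (rsum N (fun j => a (sg i') j * x' j) = a (sg i') N / p * Sr) by lra.
        rewrite H. field. auto. }
    specialize (Hinj x Hx i ltac:(lia)). unfold x in Hinj.
    apply Nat.ltb_lt in Hi. rewrite Hi in Hinj. exact Hinj. }
  destruct (IH a' Hinj' (fun i => b (sg i) - a (sg i) N / p * b r)) as [x' Hx'].
  set (Sr := rsum N (fun j => a r j * x' j)).
  exists (fun j => if Nat.ltb j N then x' j else (b r - Sr) / p).
  intros i Hi. rewrite rsum_row.
  destruct (Nat.eq_dec i r) as [->|Hne].
  - fold Sr. fold p. field. auto.
  - destruct (Hcov i Hi Hne) as [i' [Hi' E]]. subst i.
    specialize (Hx' i' Hi'). simpl in Hx'. rewrite Ha' in Hx'. fold Sr in Hx'.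
    assert (rsum N (fun j => a (sg i') j * x' j) = b (sg i') - a (sg i') N / p * b r + a (sg i') N / p * Sr) by lra.
    rewrite H. field. auto.
Qed.

Lemma rsum_ind2 n p c (x : nat -> R) :
  rsum n (fun j => (if Nat.eqb j p then c else 0) * x j) = if Nat.ltb p n then c * x p else 0.
Proof. induction n; simpl; [reflexivity|]. rewrite IHn.
 destruct (Nat.eqb_spec n p); destruct (Nat.ltb_spec p n); destruct (Nat.ltb_spec p (S n)); try lia; subst; ring. Qed.

Theorem mainTheorem10 (d n : nat) (K : curv) (tau : nat -> vec)
  (Q : nat -> nat -> nat -> R) :
  (1 <= n)%nat ->
  (* x_k <> x_{k+1}, i.e. tau_k <> 0 *)
  (forall k, (k < n)%nat -> ntau d tau k <> 0) ->
  (* |tau_k| < pi when K = 1 *)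
  (forall k, (k < n)%nat -> K = Sph -> ntau d tau k < PI) ->
  (* parallel transport is a linear isometry *)
  (forall k, (k < n)%nat -> forall u v : vec,
      ip d (par d Q k u) (par d Q k v) = ip d u v) ->
  (forall h : nat -> vec,
      Hor d n K tau Q h <->
      (forall k, (1 <= k)%nat -> (k <= n - 1)%nat -> HorCond d K tau Q h k)) /\
  (forall w : nat -> vec,
      exists m : nat -> R,
        m O = 0 /\ m n = 0 /\
        Hor d n K tau Q (fsub w (vert d tau m)) /\
        (forall m' : nat -> R, m' O = 0 -> m' n = 0 ->
           Hor d n K tau Q (fsub w (vert d tau m')) ->
           forall k, (k <= n)%nat -> m' k = m k) /\
        (forall m' : nat -> R, m' O = 0 -> m' n = 0 ->
           (Hor d n K tau Q (fsub w (vert d tau m')) <->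
            (forall k, (1 <= k)%nat -> (k <= n - 1)%nat ->
               Acoef d tau Q k * m' (S k) + Bcoef d K tau Q k * m' k
               + Ccoef d tau Q k * m' (k - 1)%nat = Dcoef d K tau Q w k)))).
Proof.
  intros Hn1 Hn Hpi Iso.
  assert (P1 : forall h : nat -> vec, Hor d n K tau Q h <->
      (forall k, (1 <= k)%nat -> (k <= n - 1)%nat -> HorCond d K tau Q h k)).
  { intros h. split.
    - intros HH k H1 H2. apply HorCond_iff.
      set (m := fun i => if Nat.eqb i k then 1 else 0).
      assert (E := HH m).
      rewrite Gvert in E by (auto; unfold m; destruct (Nat.eqb_spec 0 k), (Nat.eqb_spec n k); try lia; reflexivity).
      rewrite (rsum_ext n _ (fun j => if Nat.eqb j k then - / (4 * ntau d tau j) * Dcoef d K tau Q h j else 0)) in E.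
      2:{ intros j Hj. unfold m. destruct (Nat.eqb j k); ring. }
      rewrite rsum_ind in E by lia.
      specialize (E ltac:(unfold m; destruct (Nat.eqb_spec 0 k); [lia|reflexivity]) ltac:(unfold m; destruct (Nat.eqb_spec n k); [lia|reflexivity])).
      apply Rmult_integral in E. destruct E as [E|E]; [|exact E].
      exfalso. assert (ntau d tau k <> 0) by (apply Hn; lia).
      assert (/ (4 * ntau d tau k) <> 0) by (apply Rinv_neq_0_compat; lra). lra.
    - intros HC m H0 Hn0. rewrite Gvert by auto.
      rewrite (rsum_ext n _ (fun _ => 0)); [apply rsum_zero|].
      intros j Hj. destruct j as [|j]; [rewrite H0; ring|].
      rewrite (proj1 (HorCond_iff _ _ _ _ _ _) (HC (S j) ltac:(lia) ltac:(lia))). ring. }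
  split; [exact P1|].
  assert (Req : forall w m', Hor d n K tau Q (fsub w (vert d tau m')) <->
            (forall k, (1 <= k)%nat -> (k <= n - 1)%nat ->
               Acoef d tau Q k * m' (S k) + Bcoef d K tau Q k * m' k
               + Ccoef d tau Q k * m' (k - 1)%nat = Dcoef d K tau Q w k)).
  { intros w m'. rewrite P1. split; intros H k H1 H2; specialize (H k H1 H2).
    - apply HorCond_iff in H. rewrite Dcoef_sub, Dcoef_vert in H; auto; try (apply Hn; lia); try (apply Iso; lia). lra.
    - apply HorCond_iff. rewrite Dcoef_sub, Dcoef_vert; auto; try (apply Hn; lia); try (apply Iso; lia). lra. }
  assert (Hom : forall m, m O = 0 -> m n = 0 ->
            (forall k, (1 <= k)%nat -> (k <= n - 1)%nat ->
               Acoef d tau Q k * m (S k) + Bcoef d K tau Q k * m k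
               + Ccoef d tau Q k * m (k - 1)%nat = 0) -> forall k, (k <= n)%nat -> m k = 0).
  { intros m H0 Hn0 Hr. apply (posdef d n K tau Q m); auto.
    rewrite Gvert by auto. rewrite (rsum_ext n _ (fun _ => 0)); [apply rsum_zero|].
    intros j Hj. destruct j as [|j]; [rewrite H0; ring|].
    rewrite Dcoef_vert; try (apply Hn; lia); try (apply Iso; lia); try lia.
    rewrite Hr by lia. ring. }
  intros w.
  set (N := (n - 1)%nat).
  set (a := fun i j => (if Nat.eqb j (S i) then Acoef d tau Q (S i) else 0)
                     + (if Nat.eqb j i then Bcoef d K tau Q (S i) else 0)
                     + (if Nat.eqb (S j) i then Ccoef d tau Q (S i) else 0)).
  set (mk := fun (x : nat -> R) k => match k with O => 0 | S k' => if Nat.ltb k' N then x k' else 0 end).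
  assert (Row : forall x i, (i < N)%nat -> rsum N (fun j => a i j * x j) =
      Acoef d tau Q (S i) * mk x (S (S i)) + Bcoef d K tau Q (S i) * mk x (S i)
      + Ccoef d tau Q (S i) * mk x (S i - 1)%nat).
  { intros x i Hi. unfold a.
    rewrite (rsum_ext N _ (fun j => (if Nat.eqb j (S i) then Acoef d tau Q (S i) else 0) * x j
        + (if Nat.eqb j i then Bcoef d K tau Q (S i) else 0) * x j
        + (if Nat.eqb (S j) i then Ccoef d tau Q (S i) else 0) * x j)) by (intros; ring).
    rewrite !rsum_plus, !rsum_ind2.
    simpl (S i - 1)%nat. rewrite Nat.sub_0_r. unfold mk.
    assert (Hi' : Nat.ltb i N = true) by (apply Nat.ltb_lt; lia). rewrite Hi'.
    destruct (Nat.ltb (S i) N); (destruct i as [|i];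
    [ rewrite (rsum_ext N _ (fun _ => 0)); [rewrite rsum_zero; ring | intros; simpl; ring]
    | rewrite (rsum_ext N _ (fun j => (if Nat.eqb j i then Ccoef d tau Q (S (S i)) else 0) * x j));
      [ rewrite rsum_ind2; assert (Nat.ltb i N = true) by (apply Nat.ltb_lt; lia); rewrite H; ring
      | intros j _; simpl; reflexivity ] ]). }
  assert (mk0 : forall x, mk x O = 0) by reflexivity.
  assert (mkn : forall x, mk x n = 0).
  { intros x. unfold mk. destruct n as [|n']; [lia|]. unfold N. simpl. rewrite Nat.sub_0_r, Nat.ltb_irrefl. reflexivity. }
  destruct (LA N a) with (b := fun i => Dcoef d K tau Q w (S i)) as [x Hx].
  { intros x Hx i Hi.
    assert (Z := Hom (mk x) (mk0 x) (mkn x)).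
    assert (Z' : mk x (S i) = 0).
    { apply Z; [|lia]. intros k H1 H2. destruct k as [|k]; [lia|].
      rewrite <- Row by lia. apply Hx. lia. }
    unfold mk in Z'. assert (Nat.ltb i N = true) by (apply Nat.ltb_lt; lia). rewrite H in Z'. exact Z'. }
  exists (mk x). split; [apply mk0|]. split; [apply mkn|].
  assert (Hm : Hor d n K tau Q (fsub w (vert d tau (mk x)))).
  { apply Req. intros k H1 H2. destruct k as [|k]; [lia|]. rewrite <- Row by lia. apply Hx. lia. }
  split; [exact Hm|]. split; [|intros; apply Req].
  intros m' H0 Hn0 Hm' k Hk.
  pose proof (proj1 (Req w m') Hm') as Hm1. pose proof (proj1 (Req w (mk x)) Hm) as Hm2.
  assert (Z := Hom (fun i => m' i - mk x i) ltac:(cbv beta; rewrite H0, mk0; ring) ltac:(cbv beta; rewrite Hn0, mkn; ring)).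
  assert (m' k - mk x k = 0); [|lra].
  apply Z; [|exact Hk]. intros j H1 H2. specialize (Hm1 j H1 H2). specialize (Hm2 j H1 H2). lra.
Qed.
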